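(* Let $\hat H(w)=e^{-w}$, and let $\alpha,\beta\in\mathbb{R}$ with $\beta>1$ and $\beta>\alpha^2/4$. For $\tilde\tau>0$ and $\omega>0$, the number $i\omega$ is a root of $\Phi(w)=0$ if and only if there exist $k\in\mathbb{Z}$ and a sign $\pm$ such that $$\omega=\omega_k^{\pm}:=\pm\tfrac12\arccos\frac{\alpha}{2\sqrt\beta}+k\pi-\arctan\sqrt{\sqrt\beta-1}\quad\text{and}\quad \tilde\tau=\frac{\omega_k^{\pm}}{\sqrt{\sqrt\beta-1}}.$$ If $\beta\le 1$ and $\beta>\alpha^2/4$, there is no $\tilde\tau>0$ for which $\Phi$ has a root $i\omega$ with $\omega>0$.
   Context: For a delay-to-time-constant ratio $\tilde\tau>0$ and $\alpha,\beta\in\mathbb{R}$, the rescaled characteristic equation of the linearized coupled Wilson–Cowan system with kernel transform $\hat H$ is $$\Phi(w):=(w+\tilde\tau)^4-\alpha\,\tilde\tau^2(w+\tilde\tau)^2\hat H(w)^2+\beta\,\tilde\tau^4\hat H(w)^4=0.$$ For the Dirac (discrete) delay kernel, $\hat H(w)=e^{-w}$. *)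

(* Defs.v *)
From Stdlib Require Import Reals ZArith.
From Coquelicot Require Import Coquelicot.
Open Scope R_scope.

Definition Cexp (z : C) : C :=
  (exp (Re z) * cos (Im z), exp (Re z) * sin (Im z)).

Definition Hhat_dirac (w : C) : C := Cexp (Copp w).

Definition Phi (Hhat : C -> C) (alpha beta tau : R) (w : C) : C :=
  Cplus (Cminus (Cpow (Cplus w (RtoC tau)) 4)
          (Cmult (RtoC (alpha * tau ^ 2))
                 (Cmult (Cpow (Cplus w (RtoC tau)) 2) (Cpow (Hhat w) 2))))
        (Cmult (RtoC (beta * tau ^ 4)) (Cpow (Hhat w) 4)).

(* omega_k^{+/-}, with sign s in {1,-1}. *)
Definition omega_k (alpha beta s : R) (k : Z) : R :=
  s * (/2 * acos (alpha / (2 * sqrt beta))) + IZR k * PI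
  - atan (sqrt (sqrt beta - 1)).

(* Main.v *)
Require Import Defs.
From Stdlib Require Import Reals ZArith Lra Psatz.
From Coquelicot Require Import Coquelicot.
Open Scope R_scope.

Definition G (A B : R) (u h : C) : C :=
  Cplus (Cminus (Cpow u 4) (Cmult (RtoC A) (Cmult (Cpow u 2) (Cpow h 2))))
        (Cmult (RtoC B) (Cpow h 4)).

Lemma Phi_G al be tau w :
  Phi Hhat_dirac al be tau w = G (al * tau^2) (be * tau^4) (Cplus w (RtoC tau)) (Hhat_dirac w).
Proof. reflexivity. Qed.

Lemma L1 A B u h e :
  Cmult (Cpow e 4) (G A B u h) = G A B (Cmult u e) (Cmult h e).
Proof.
  destruct u as [u1 u2], h as [h1 h2], e as [e1 e2].
  unfold G, Cminus, Cplus, Copp, Cmult, RtoC; simpl.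
  apply injective_projections; simpl; ring.
Qed.

Lemma L3 h e X :
  Cmult (Cpow h 4) (Cmult (Cpow e 4) X) = Cmult (Cpow (Cmult h e) 4) X.
Proof.
  destruct h as [h1 h2], e as [e1 e2], X as [x1 x2].
  unfold Cmult; simpl.
  apply injective_projections; simpl; ring.
Qed.

Lemma L4 X : Cmult (Cpow (RtoC 1) 4) X = X.
Proof.
  destruct X as [x1 x2]. unfold Cmult, RtoC; simpl.
  apply injective_projections; simpl; ring.
Qed.

Lemma L5 X : Cmult X (RtoC 0) = RtoC 0.
Proof.
  destruct X as [x1 x2]. unfold Cmult, RtoC; simpl.
  apply injective_projections; simpl; ring.
Qed.

Lemma G_comp A B a b :
  G A B (a, b) (RtoC 1) =
  (((a^2-b^2)^2 - (2*a*b)^2 - A*(a^2-b^2) + B), (2*(a^2-b^2)*(2*a*b) - A*(2*a*b))).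
Proof.
  unfold G, Cminus, Cplus, Copp, Cmult, RtoC; simpl.
  apply injective_projections; simpl; ring.
Qed.

Lemma Phi_iff al be tau om :
  Phi Hhat_dirac al be tau (0, om) = RtoC 0 <->
  G (al * tau^2) (be * tau^4)
    (tau * cos om - om * sin om, tau * sin om + om * cos om) (RtoC 1) = RtoC 0.
Proof.
  set (e := (cos om, sin om)).
  assert (He : Cmult (Hhat_dirac (0, om)) e = RtoC 1).
  { unfold Hhat_dirac, Cexp, Copp, Cmult, RtoC, e; simpl.
    rewrite Ropp_0, exp_0, cos_neg, sin_neg.
    apply injective_projections; simpl.
    - pose proof (sin2_cos2 om). unfold Rsqr in H. nra.
    - ring. }
  assert (Hu : Cmult (Cplus (0, om) (RtoC tau)) e =
     (tau * cos om - om * sin om, tau * sin om + om * cos om)).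
  { unfold Cplus, Cmult, RtoC, e; simpl. apply injective_projections; simpl; ring. }
  rewrite Phi_G, <- Hu, <- He, <- L1.
  split; intro H.
  - rewrite H. apply L5.
  - rewrite <- (L4 (G _ _ _ _)), <- He, <- L3, H. apply L5.
Qed.

Lemma cosZ x k : cos (x + 2 * IZR k * PI) = cos x.
Proof.
  destruct k as [|p|p].
  - simpl. f_equal; ring.
  - rewrite <- (positive_nat_Z p), <- INR_IZR_INZ. apply cos_period.
  - change (IZR (Z.neg p)) with (- IZR (Z.pos p)).
    rewrite <- (positive_nat_Z p), <- INR_IZR_INZ.
    rewrite <- (cos_period (x + 2 * - INR (Pos.to_nat p) * PI) (Pos.to_nat p)).
    f_equal; ring.
Qed.

Lemma cos_eq a b : cos a = cos b ->
  exists k : Z, a = b + 2 * IZR k * PI \/ a = - b + 2 * IZR k * PI.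
Proof.
  intro H. assert (H2 : cos a - cos b = 0) by lra.
  rewrite form2 in H2.
  destruct (Rmult_integral _ _ H2) as [H3|H3].
  - destruct (Rmult_integral _ _ H3) as [H4|H4]; [lra|].
    destruct (sin_eq_0_0 _ H4) as [k Hk]. exists k. left. lra.
  - destruct (sin_eq_0_0 _ H3) as [k Hk]. exists k. right. lra.
Qed.

Lemma quad A B x y : 4 * B - A^2 > 0 ->

  ((x^2 - y^2 - A*x + B = 0 /\ 2*x*y - A*y = 0) <-> (x = A/2 /\ y^2 = B - A^2/4)).
Proof.
  intros HD. split.
  - intros [H1 H2].
    assert (Hy : y * (2*x - A) = 0) by lra.
    destruct (Rmult_integral _ _ Hy) as [H3|H3].
    + subst y. exfalso. assert (0 <= (2*x-A)^2) by apply pow2_ge_0. nra.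
    + split; [lra|]. assert (x = A/2) by lra. subst x. nra.
  - intros [H1 H2]. subst x. split; nra.
Qed.

Lemma Phi_xy al be tau om : 0 < tau -> al^2/4 < be ->
  let a := tau * cos om - om * sin om in
  let b := tau * sin om + om * cos om in
  (Phi Hhat_dirac al be tau (0, om) = RtoC 0 <->
   (a^2 - b^2 = al * tau^2 / 2 /\ (2*a*b)^2 = tau^4 * (be - al^2/4))).
Proof.
  intros Ht Hab a b.
  rewrite Phi_iff. fold a b. rewrite G_comp.
  assert (Ht4 : 0 < tau^4) by (apply pow_lt; lra).
  pose proof (quad (al*tau^2) (be*tau^4) (a^2-b^2) (2*a*b)) as Q.
  destruct Q as [Q1 Q2]. { nra. }
  split.
  - intro H. injection H as H1 H2.
    destruct Q1 as [R1 R2]. split; lra. split; lra.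
  - intros [H1 H2]. destruct Q2 as [R1 R2]. split. lra. rewrite H2; field.
    unfold RtoC. f_equal; lra.
Qed.

Lemma N_eq tau om : let a := tau * cos om - om * sin om in
  let b := tau * sin om + om * cos om in a^2 + b^2 = tau^2 + om^2.
Proof.
  intros a b. unfold a, b. pose proof (sin2_cos2 om). unfold Rsqr in H. nra.
Qed.

Lemma trig_x tau om c r : 0 < r -> r^2 = 1 + c^2 ->
  (tau * cos om - tau * c * sin om)^2 - (tau * sin om + tau * c * cos om)^2
  = tau^2 * r^2 * cos (2 * (om + atan c)).
Proof.
  intros Hr Hr2.
  assert (Hs : sqrt (1 + c²) = r).
  { replace (1 + c²) with (r^2) by (unfold Rsqr; lra). rewrite sqrt_pow2; lra. }
  replace (2 * (om + atan c)) with (2 * om + 2 * atan c) by ring.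
  rewrite cos_plus, cos_2a, sin_2a, cos_2a, sin_2a, cos_atan, sin_atan, Hs.
  field. lra.
Qed.

Theorem mainTheorem7 (alpha beta : R) :
  (1 < beta -> alpha ^ 2 / 4 < beta ->
   forall tau omega : R, 0 < tau -> 0 < omega ->
   (Phi Hhat_dirac alpha beta tau (0, omega) = RtoC 0 <->
    exists (k : Z) (s : R), (s = 1 \/ s = -1) /\
      omega = omega_k alpha beta s k /\
      tau = omega_k alpha beta s k / sqrt (sqrt beta - 1)))
  /\
  (beta <= 1 -> alpha ^ 2 / 4 < beta ->
   ~ exists tau omega : R, 0 < tau /\ 0 < omega /\
       Phi Hhat_dirac alpha beta tau (0, omega) = RtoC 0).
Proof.
  split.
  - intros Hb Hab tau om Ht Ho.
    set (sb := sqrt beta).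
    assert (Hsb2 : sb^2 = beta) by (unfold sb; rewrite pow2_sqrt; lra).
    assert (Hsb0 : 0 <= sb) by (unfold sb; apply sqrt_pos).
    assert (Hsb : 1 < sb) by (destruct (Rle_lt_dec sb 1); [assert (sb*sb <= 1*1) by (apply Rmult_le_compat; lra); simpl in Hsb2; lra | lra]).
    set (c := sqrt (sb - 1)).
    assert (Hc2 : c^2 = sb - 1) by (unfold c; rewrite pow2_sqrt; lra).
    assert (Hc : 0 < c) by (unfold c; apply sqrt_lt_R0; lra).
    set (r := sqrt sb).
    assert (Hr2 : r^2 = 1 + c^2) by (unfold r; rewrite pow2_sqrt; lra).
    assert (Hr : 0 < r) by (unfold r; apply sqrt_lt_R0; lra).
    set (q := alpha / (2 * sb)).
    assert (Hq : alpha = 2 * sb * q) by (unfold q; field; lra).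
    assert (Hq2 : q^2 < 1).
    { rewrite Hq, <- Hsb2 in Hab.
      assert (sb^2 * (q^2 - 1) < 0) by nra.
      assert (0 < sb^2) by nra. nra. }
    assert (Hq1 : -1 <= q <= 1) by (split; nra).
    set (th := acos q).
    assert (Hth : cos th = q) by (unfold th; apply cos_acos; exact Hq1).
    assert (Hom : omega_k alpha beta = fun s k => s * (/2 * th) + IZR k * PI - atan c)
      by reflexivity.
    rewrite Hom.
    rewrite Phi_xy by lra.
    pose proof (N_eq tau om) as HN. cbv zeta in HN.
    set (a := tau * cos om - om * sin om) in *.
    set (b := tau * sin om + om * cos om) in *.
    transitivity (om = tau * c /\ cos (2 * (om + atan c)) = cos th).
    + split.
      * intros [H1 H2].
        assert (HN2 : (a^2+b^2)^2 = (tau^2 * sb)^2).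
        { replace ((a^2+b^2)^2) with ((a^2-b^2)^2 + (2*a*b)^2) by ring.
          rewrite H1, H2. nra. }
        assert (HN3 : a^2 + b^2 = tau^2 * sb).
        { assert (P1 : 0 < a^2 + b^2) by (rewrite HN; nra).
          assert (P2 : 0 < tau^2 * sb) by nra.
          assert (P3 : (a^2+b^2 - tau^2*sb) * (a^2+b^2 + tau^2*sb) = 0) by nra.
          destruct (Rmult_integral _ _ P3); lra. }
        assert (Hoc : om = tau * c).
        { assert (P3 : (om - tau*c) * (om + tau*c) = 0) by nra.
          destruct (Rmult_integral _ _ P3); nra. }
        split; [exact Hoc|].
        pose proof (trig_x tau om c r Hr Hr2) as T.
        assert (Ha : a = tau * cos om - tau * c * sin om) by (unfold a; rewrite <- Hoc; ring).
        assert (Hb' : b = tau * sin om + tau * c * cos om) by (unfold b; rewrite <- Hoc; ring).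
        rewrite <- Ha, <- Hb' in T.
        rewrite Hth.
        assert (tau^2 * r^2 <> 0) by nra.
        apply (Rmult_eq_reg_l (tau^2 * r^2)); [|assumption].
        rewrite <- T, H1, Hq. nra.
      * intros [Hoc Hcos].
        pose proof (trig_x tau om c r Hr Hr2) as T.
        assert (Ha : a = tau * cos om - tau * c * sin om) by (unfold a; rewrite <- Hoc; ring).
        assert (Hb' : b = tau * sin om + tau * c * cos om) by (unfold b; rewrite <- Hoc; ring).
        rewrite <- Ha, <- Hb' in T.
        assert (H1 : a^2 - b^2 = alpha * tau^2 / 2).
        { rewrite T, Hcos, Hth, Hq, Hr2, Hc2. field. }
        split; [exact H1|].
        replace ((2*a*b)^2) with ((a^2+b^2)^2 - (a^2-b^2)^2) by ring.
        rewrite HN, H1, Hoc. nra.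
    + split.
      * intros [Hoc Hcos].
        destruct (cos_eq _ _ Hcos) as [k [Hk|Hk]].
        -- exists k, 1. split; [left; reflexivity|].
           assert (E : om = 1 * (/ 2 * th) + IZR k * PI - atan c) by lra.
           split; [exact E|]. rewrite <- E, Hoc. field. lra.
        -- exists k, (-1). split; [right; reflexivity|].
           assert (E : om = -1 * (/ 2 * th) + IZR k * PI - atan c) by lra.
           split; [exact E|]. rewrite <- E, Hoc. field. lra.
      * intros [k [s [Hs [E Et]]]].
        rewrite <- E in Et.
        split.
        -- rewrite Et. field. lra.
        -- replace (2 * (om + atan c)) with (s * th + 2 * IZR k * PI) by (rewrite E; field).
           rewrite cosZ. destruct Hs as [-> | ->].
           ++ f_equal; ring.
           ++ replace (-1 * th) with (- th) by ring. apply cos_neg.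
  - intros Hb Hab [tau [om [Ht [Ho H]]]].
    rewrite Phi_xy in H by lra.
    pose proof (N_eq tau om) as HN. cbv zeta in HN.
    set (a := tau * cos om - om * sin om) in *.
    set (b := tau * sin om + om * cos om) in *.
    destruct H as [H1 H2].
    assert (HN2 : (a^2+b^2)^2 = tau^4 * beta).
    { replace ((a^2+b^2)^2) with ((a^2-b^2)^2 + (2*a*b)^2) by ring.
      rewrite H1, H2. field. }
    rewrite HN in HN2.
    assert (0 < tau^4) by (apply pow_lt; lra).
    assert (0 < om^2) by nra.
    nra.
Qed.
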